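(* Let $G,H$ be finite simple graphs. Then the Euler characteristic of the strong product is multiplicative: $\chi(G*H)=\chi(G)\,\chi(H)$.
   Context: The Euler characteristic of a finite simple graph is $\chi(G)=\sum_{k\ge0}(-1)^k f_k(G)$, where $f_k(G)$ is the number of complete subgraphs of $G$ with $k+1$ vertices. The strong product $G*H$ has vertex set $V(G)\times V(H)$, and two distinct vertices $(a,b),(c,d)$ are adjacent iff ($a=c$ or $a$ is adjacent to $c$ in $G$) and ($b=d$ or $b$ is adjacent to $d$ in $H$). *)

(* Defs.v *)
From mathcomp Require Import all_boot all_order all_algebra.
Set Implicit Arguments. Unset Strict Implicit. Unset Printing Implicit Defensive.
Import GRing.Theory Num.Theory.

Definition simple_graph (T : finType) (e : rel T) : Prop :=
  symmetric e /\ irreflexive e.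

Definition is_clique (T : finType) (e : rel T) (A : {set T}) : bool :=
  (A != set0) && [forall x in A, forall y in A, (x != y) ==> e x y].

Definition fvec (T : finType) (e : rel T) (k : nat) : nat :=
  #|[set A : {set T} | is_clique e A & #|A| == k.+1]|.

(* Euler characteristic chi(G) = sum_{k>=0} (-1)^k f_k(G); f_k = 0 for k >= |T|. *)
Definition euler_char (T : finType) (e : rel T) : int :=
  (\sum_(k < #|T|) (-1) ^+ k * (fvec e k)%:Z)%R.

Definition strong_prod (T U : finType) (e : rel T) (f : rel U) : rel (T * U) :=
  fun p q => (p != q) && ((p.1 == q.1) || e p.1 q.1) && ((p.2 == q.2) || f p.2 q.2).

(* Main.v *)
Require Import Defs.
From mathcomp Require Import all_boot all_order all_algebra.
Import GRing.Theory Num.Theory.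
Local Open Scope ring_scope.

Lemma alt_sum (T : finType) (D : {set T}) :
  \sum_(X : {set T} | X \subset D) (-1) ^+ #|X| = (D == set0)%:R :> int.
Proof.
have [->|[x xD]] := set_0Vmem D.
  rewrite eqxx (big_pred1 set0); first by rewrite cards0.
  by move=> X /=; rewrite subset0.
have -> : (D == set0) = false by apply/negbTE/set0Pn; exists x.
pose t (X : {set T}) := if x \in X then X :\ x else x |: X.
have tK : involutive t.
  move=> X; rewrite /t; case: (boolP (x \in X)) => xX.
    by rewrite setD11 setD1K.
  by rewrite setU11 setU1K.
set S := \sum_(X | _) _.
have : S = - S.
  rewrite {1}/S (reindex_inj (inv_inj tK)) /S -sumrN.
  apply: congr_big => // [X|X _].
    rewrite /t; case: (boolP (x \in X)) => xX.
      by rewrite subDset (setUidPr _) // sub1set.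
    by rewrite subUset sub1set xD.
  rewrite /t; case: (boolP (x \in X)) => xX.
    by rewrite (cardsD1 x X) xX exprS mulN1r opprK.
  by rewrite cardsU1 xX exprS mulN1r.
move/eqP; rewrite -subr_eq0 opprK -mulr2n mulrn_eq0 /= => /eqP ->.
by [].
Qed.

Section Phi.
Variables (T U : finType).
Local Notation s n := ((-1) ^+ n : int).

Lemma inX (p : T * U) A B : (p \in setX A B) = (p.1 \in A) && (p.2 \in B).
Proof. by case: p => a b; rewrite in_setX. Qed.

Lemma img_fst_sub (C : {set T * U}) A B : C \subset setX A B -> fst @: C \subset A.
Proof.
move/subsetP=> H; apply/subsetP => x /imsetP [p /H pC ->].
by move: pC; rewrite inX => /andP [].
Qed.

Lemma img_snd_sub (C : {set T * U}) A B : C \subset setX A B -> snd @: C \subset B.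
Proof.
move/subsetP=> H; apply/subsetP => x /imsetP [p /H pC ->].
by move: pC; rewrite inX => /andP [].
Qed.

Arguments img_fst_sub {C A B}.
Arguments img_snd_sub {C A B}.

Lemma subX_img (C : {set T * U}) : C \subset setX (fst @: C) (snd @: C).
Proof.
apply/subsetP => p pC; rewrite inX; apply/andP; split; apply/imsetP; by exists p.
Qed.

Lemma setX_eq0 (A : {set T}) (B : {set U}) :
  (setX A B == set0) = (A == set0) || (B == set0).
Proof.
case: (set_0Vmem A) => [->|[a aA]].
  by rewrite eqxx /=; apply/eqP/setP => p; rewrite inX inE in_set0.
case: (set_0Vmem B) => [->|[b bB]].
  by rewrite eqxx orbT; apply/eqP/setP => p; rewrite inX !inE andbF.
have -> : (A == set0) = false by apply/negbTE/set0Pn; exists a.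
have -> : (B == set0) = false by apply/negbTE/set0Pn; exists b.
apply/negbTE/set0Pn; exists (a, b); by rewrite in_setX aA bB.
Qed.

Lemma key_bool (A : {set T}) (B : {set U}) (C : {set T * U}) (Y : {set T}) (Z : {set U}) :
  [&& C \subset setX A B, Y \subset A :\: fst @: C & Z \subset B :\: snd @: C] =
  [&& Y \subset A, Z \subset B & C \subset setX (A :\: Y) (B :\: Z)].
Proof.
apply/idP/idP.
  move=> /and3P [/subsetP hC /subsetP hY /subsetP hZ].
  apply/and3P; split.
  - by apply/subsetP => y /hY; rewrite inE => /andP [].
  - by apply/subsetP => y /hZ; rewrite inE => /andP [].
  apply/subsetP => p pC; have := hC p pC; rewrite !inX !inE => /andP [-> ->].
  rewrite !andbT; apply/andP; split.
    apply/negP => /hY; rewrite inE => /andP [/negP []]; by apply/imsetP; exists p.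
  apply/negP => /hZ; rewrite inE => /andP [/negP []]; by apply/imsetP; exists p.
move=> /and3P [hY hZ /subsetP hC].
apply/and3P; split.
- apply/subsetP => p /hC; rewrite !inX !inE => /andP [/andP [_ ->] /andP [_ ->]].
  by [].
- apply/subsetP => y yY; rewrite inE (subsetP hY _ yY) andbT.
  apply/imsetP => [[p /hC]]; rewrite inX !inE => /andP [/andP [h _] _] eq.
  by move: h; rewrite -eq yY.
- apply/subsetP => y yY; rewrite inE (subsetP hZ _ yY) andbT.
  apply/imsetP => [[p /hC]]; rewrite inX !inE => /andP [_ /andP [h _]] eq.
  by move: h; rewrite -eq yY.
Qed.

Lemma Phi (A : {set T}) (B : {set U}) : A != set0 -> B != set0 ->
  \sum_(C : {set T * U} | (fst @: C == A) && (snd @: C == B)) s #|C|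
  = - (s #|A| * s #|B|).
Proof.
move=> A0 B0.
transitivity (\sum_(C : {set T * U} | C \subset setX A B)
   s #|C| * (\sum_(Y : {set T} | Y \subset A :\: fst @: C) s #|Y|)
          * (\sum_(Z : {set U} | Z \subset B :\: snd @: C) s #|Z|)).
  rewrite big_mkcond [RHS]big_mkcond /=; apply: eq_bigr => C _.
  rewrite !alt_sum.
  case: (boolP (C \subset setX A B)) => hC.
    rewrite !setD_eq0.
    have h1 := img_fst_sub hC; have h2 := img_snd_sub hC.
    rewrite !eqEsubset h1 h2 /=.
    by case: (A \subset _); case: (B \subset _); rewrite /= ?mulr1 ?mulr0.
  case: ifP => // /andP [/eqP h1 /eqP h2].
  by case/negP: hC; rewrite -h1 -h2 subX_img.
transitivity (\sum_(C : {set T * U}) \sum_(Y : {set T}) \sum_(Z : {set U})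
   (if [&& C \subset setX A B, Y \subset A :\: fst @: C & Z \subset B :\: snd @: C]
    then s #|C| * s #|Y| * s #|Z| else 0)).
  rewrite big_mkcond /=; apply: eq_bigr => C _.
  case: (C \subset setX A B); last by rewrite big1 // => Y _; rewrite big1.
  rewrite (big_distrr (s #|C|)) /= big_distrl /= big_mkcond /=; apply: eq_bigr => Y _.
  case: (Y \subset _); last by rewrite big1.
  by rewrite big_distrr /= big_mkcond.
rewrite exchange_big /=.
under eq_bigr => Y _ do rewrite exchange_big /=.
under eq_bigr => Y _ do under eq_bigr => Z _ do under eq_bigr => C _ do
  rewrite key_bool.
transitivity (\sum_(Y : {set T} | Y \subset A) \sum_(Z : {set U} | Z \subset B)
   s #|Y| * s #|Z| * ((A :\: Y == set0) || (B :\: Z == set0))%:R).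
  rewrite [RHS]big_mkcond; apply: eq_bigr => Y _.
  case hY: (Y \subset A) => /=; last by rewrite big1 // => Z _; rewrite big1.
  rewrite [RHS]big_mkcond; apply: eq_bigr => Z _.
  case hZ: (Z \subset B) => /=; last by rewrite big1.
  rewrite -setX_eq0 -alt_sum big_distrr /= [RHS]big_mkcond /=; apply: eq_bigr => C _.
  case: (C \subset _); rewrite /= ?mulr0 //.
  by rewrite [RHS]mulrC !mulrA.
transitivity (\sum_(Y : {set T} | Y \subset A) \sum_(Z : {set U} | Z \subset B)
   s #|Y| * s #|Z| * ((Y == A) || (Z == B))%:R).
  apply: eq_bigr => Y hY; apply: eq_bigr => Z hZ.
  by rewrite !setD_eq0 (@eqEsubset _ Y A) hY (@eqEsubset _ Z B) hZ.
rewrite (bigD1 A) //= eqxx /=.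
under eq_bigr => Z _ do rewrite mulr1.
rewrite -big_distrr /= alt_sum (negbTE B0) mulr0 add0r.
transitivity (\sum_(Y : {set T} | (Y \subset A) && (Y != A)) s #|Y| * s #|B|).
  apply: eq_bigr => Y /andP [_ nYA].
  rewrite (bigD1 B) //= eqxx orbT mulr1 big1 ?addr0 // => Z /andP [_ nZB].
  by rewrite (negbTE nYA) (negbTE nZB) mulr0.
have h := @alt_sum _ A; rewrite (bigD1 A) //= (negbTE A0) in h.
rewrite -big_distrl /=.
set R := \sum_(Y | _) _ in h *.
have -> : R = - s #|A| by rewrite -[R](addKr (s #|A|)) h addr0.
by rewrite mulNr.
Qed.
End Phi.
Lemma chiE (T : finType) (e : rel T) :
  euler_char e = \sum_(A : {set T} | is_clique e A) - (-1) ^+ #|A|.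
Proof.
rewrite /euler_char /fvec.
transitivity (\sum_(k < #|T|) \sum_(A : {set T}) 
   (if is_clique e A && (#|A| == k.+1)%N then (-1) ^+ k else 0 : int)).
  apply: eq_bigr => k _; rewrite -big_mkcond /= sumr_const.
  rewrite -mulr_natr; congr (_ * _).
  by rewrite natz cardsE.
rewrite exchange_big /= [RHS]big_mkcond /=; apply: eq_bigr => A _.
case cA: (is_clique e A); last by rewrite big1.
have A0 : (0 < #|A|)%N.
  by move: cA; rewrite /is_clique => /andP [/set0Pn [x xA] _]; apply/card_gt0P; exists x.
have AT : (#|A|.-1 < #|T|)%N.
  by rewrite prednK // max_card.
rewrite /= -big_mkcond /= (big_pred1 (Ordinal AT)) /=; last first.
  by move=> k /=; rewrite -(inj_eq val_inj) /=; apply/eqP/eqP => [->|->] //; rewrite (prednK A0).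
by rewrite -[in RHS](prednK A0) exprS mulN1r opprK.
Qed.
Lemma clique_prod (T U : finType) (e : rel T) (f : rel U) (C : {set T * U}) :
  is_clique (strong_prod e f) C =
  is_clique e (fst @: C) && is_clique f (snd @: C).
Proof.
rewrite /is_clique.
have E1 : (fst @: C != set0) = (C != set0).
  apply/set0Pn/set0Pn => [[a /imsetP [p pC _]]|[p pC]]; first by exists p.
  by exists p.1; apply/imsetP; exists p.
have E2 : (snd @: C != set0) = (C != set0).
  apply/set0Pn/set0Pn => [[a /imsetP [p pC _]]|[p pC]]; first by exists p.
  by exists p.2; apply/imsetP; exists p.
rewrite E1 E2; case: (C != set0) => //=.
apply/idP/idP.
  move/forallP=> H; apply/andP; split.
    apply/forall_inP => a /imsetP [p pC ->]; apply/forall_inP => c /imsetP [q qC ->].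
    apply/implyP => ne.
    have pq : p != q by apply: contraNneq ne => ->.
    move: (forall_inP (implyP (H p) pC) q) => /(_ qC) /implyP /(_ pq).
    by rewrite /strong_prod (negbTE ne) /= => /andP [/andP [_ ->]].
  apply/forall_inP => a /imsetP [p pC ->]; apply/forall_inP => c /imsetP [q qC ->].
  apply/implyP => ne.
  have pq : p != q by apply: contraNneq ne => ->.
  move: (forall_inP (implyP (H p) pC) q) => /(_ qC) /implyP /(_ pq).
  by rewrite /strong_prod (negbTE ne) /= => /andP [_ ->].
move=> /andP [/forall_inP H1 /forall_inP H2].
apply/forall_inP => p pC; apply/forall_inP => q qC; apply/implyP => pq.
rewrite /strong_prod pq /=.
have p1 : p.1 \in fst @: C by apply/imsetP; exists p.
have q1 : q.1 \in fst @: C by apply/imsetP; exists q.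
have p2 : p.2 \in snd @: C by apply/imsetP; exists p.
have q2 : q.2 \in snd @: C by apply/imsetP; exists q.
move: (forall_inP (H1 _ p1) _ q1) (forall_inP (H2 _ p2) _ q2) => /implyP h1 /implyP h2.
apply/andP; split.
  by case: eqP => //= /eqP ne; apply: h1.
by case: eqP => //= /eqP ne; apply: h2.
Qed.

Lemma clique_ne0 (T : finType) (e : rel T) (A : {set T}) : is_clique e A -> A != set0.
Proof. by case/andP. Qed.

Theorem mainTheorem5 (T U : finType) (e : rel T) (f : rel U) :
  simple_graph e -> simple_graph f ->
  euler_char (strong_prod e f) = (euler_char e * euler_char f)%R.
Proof.
move=> _ _.
rewrite !chiE big_distrlr /=.
rewrite (eq_bigl (fun C : {set T * U} => is_clique e (fst @: C) && is_clique f (snd @: C)));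
  last by move=> C; rewrite clique_prod.
rewrite (partition_big (fun C : {set T * U} => (fst @: C, snd @: C))
   (fun j : {set T} * {set U} => is_clique e j.1 && is_clique f j.2)) //=.
rewrite -(pair_big (fun A => is_clique e A) (fun B => is_clique f B)
   (fun A B => \sum_(C : {set T * U} | (is_clique e (fst @: C) && is_clique f (snd @: C))
       && ((fst @: C, snd @: C) == (A, B))) - (-1) ^+ #|C| : int)) /=.
apply: eq_bigr => A cA; apply: eq_bigr => B cB.
rewrite (eq_bigl (fun C : {set T * U} => (fst @: C == A) && (snd @: C == B))); last first.
  move=> C /=; rewrite xpair_eqE.
  case: (fst @: C =P A) => [->|_]; case: (snd @: C =P B) => [->|_];
  by rewrite /= ?cA ?cB ?andbF ?eqxx.
rewrite sumrN Phi; [|exact: clique_ne0 cA|exact: clique_ne0 cB].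
by rewrite opprK mulrN mulNr opprK.
Qed.
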